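(* Let $d\ge3$. Every $d$-regular graph on $n$ vertices has a total vertex cover with at most $\frac{d}{d+1}\,n$ vertices. Moreover, if $d\ge5$, then every connected $d$-regular graph on $n$ vertices other than the complete graph $K_{d+1}$ has a total vertex cover with at most $\frac{d-\epsilon}{d+1}\,n$ vertices, where $\epsilon=\frac{1}{2d+1}$.
   Context: A total vertex cover of a graph $G$ is a set $S\subseteq V(G)$ that is a vertex cover (every edge has an endpoint in $S$) and a total dominating set (every vertex of $G$, including those in $S$, has a neighbour in $S$). *)

(* Defs.v *)
From mathcomp Require Import all_boot.
Set Implicit Arguments. Unset Strict Implicit. Unset Printing Implicit Defensive.

Definition simple_graph (T : finType) (e : rel T) : Prop :=
  symmetric e /\ irreflexive e.

Definition nbhd (T : finType) (e : rel T) (x : T) : {set T} := [set y | e x y].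

Definition regular (T : finType) (e : rel T) (d : nat) : Prop :=
  forall x : T, #|nbhd e x| = d.

Definition vertex_cover (T : finType) (e : rel T) (S : {set T}) : Prop :=
  forall x y : T, e x y -> (x \in S) || (y \in S).

Definition total_dominating (T : finType) (e : rel T) (S : {set T}) : Prop :=
  forall x : T, exists2 y, y \in S & e x y.

Definition total_vertex_cover (T : finType) (e : rel T) (S : {set T}) : Prop :=
  vertex_cover e S /\ total_dominating e S.

Definition connected_graph (T : finType) (e : rel T) : Prop :=
  forall x y : T, connect e x y.

Definition is_complete_graph (T : finType) (e : rel T) (m : nat) : Prop :=
  #|T| = m /\ (forall x y : T, x != y -> e x y).

(* Main.v *)
Require Import Defs.
From mathcomp Require Import all_boot.
From mathcomp Require Import zify.
Set Implicit Arguments. Unset Strict Implicit. Unset Printing Implicit Defensive.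

Lemma sum_ind (T : finType) (C A : {set T}) :
  \sum_(v in C) (v \in A : nat) = #|C :&: A|.
Proof.
rewrite (eq_bigr (fun v => if v \in A then 1 else 0)); last by move=> v _; case: (v \in A).
rewrite -big_mkcondr sum1_card; apply: eq_card => v; by rewrite !inE.
Qed.

Section Pf.
Variables (T : finType) (e : rel T) (d : nat).
Hypothesis esym : symmetric e.
Hypothesis eirr : irreflexive e.
Hypothesis reg : regular e d.

Notation N := (nbhd e).

Lemma inN x y : (y \in N x) = e x y.
Proof. by rewrite inE. Qed.

Lemma double_count (I J : {set T}) :
  \sum_(v in J) #|N v :&: I| = \sum_(u in I) #|N u :&: J|.
Proof.
have H (x : T) (B : {set T}) : #|N x :&: B| = \sum_(u in B) (u \in N x : nat).
  by rewrite sum_ind setIC.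
under eq_bigr do rewrite H.
rewrite exchange_big /=; apply: eq_bigr => u _; rewrite H.
by apply: eq_bigr => v _; rewrite !inN esym.
Qed.


Definition Pind (I : {set T}) : bool :=
  [forall x, [forall y, (x \in I) && (y \in I) ==> ~~ e x y]] &&
  [forall x, (x \notin I) ==> [exists y, e x y && (y \notin I)]].

Lemma PindP (I : {set T}) :
  reflect ((forall x y, x \in I -> y \in I -> ~~ e x y) /\
           (forall x, x \notin I -> exists2 y, e x y & y \notin I)) (Pind I).
Proof.
apply: (iffP andP) => [[/forallP H1 /forallP H2]|[H1 H2]]; split.
- by move=> x y xI yI; move/forallP: (H1 x) => /(_ y); rewrite xI yI.
- by move=> x xI; move/implyP: (H2 x) => /(_ xI) /existsP [y /andP [] ]; exists y.
- by apply/forallP => x; apply/forallP => y; apply/implyP => /andP [] ; apply: H1.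
- apply/forallP => x; apply/implyP => /H2 [y ??]; apply/existsP; exists y; exact/andP.
Qed.

Hypothesis d3 : 3 <= d.

Lemma nbr_exists x : exists y, e x y.
Proof.
have: 0 < #|N x| by rewrite reg; case: d d3.
by case/card_gt0P => y; rewrite inN; exists y.
Qed.

Lemma Pind0 : Pind set0.
Proof.
apply/PindP; split; first by move=> x y; rewrite inE.
by move=> x _; have [y ?] := nbr_exists x; exists y; rewrite ?inE.
Qed.

Lemma nonclique : connected_graph e -> ~ is_complete_graph e d.+1 ->
  forall u, exists a b, [/\ e u a, e u b, a != b & ~~ e a b].
Proof.
move=> conn ncomp u.
case: (boolP [exists a, exists b, [&& e u a, e u b, a != b & ~~ e a b]]).
  by case/existsP => a /existsP [b /and4P [*]]; exists a, b.
move=> Hn.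
have cl a b : e u a -> e u b -> a != b -> e a b.
  move=> eua eub ab; apply/negPn/negP => nab; move/negP: Hn; apply.
  by apply/existsP; exists a; apply/existsP; exists b; rewrite eua eub ab nab.
pose C := u |: N u.
have uN : u \notin N u by rewrite inN eirr.
have cardC : #|C| = d.+1 by rewrite cardsU1 uN reg.
have closed v z : v \in C -> e v z -> z \in C.
  rewrite !inE => /orP [/eqP -> euz|euv evz]; first by rewrite euz orbT.
  apply/negPn/negP => zC.
  have sub : z |: (C :\ v) \subset N v.
    apply/subsetP => y; rewrite !inE => /orP [/eqP -> //|/andP [yv /orP [/eqP ->|euy]]].
      by rewrite esym.
    by apply: cl => //; rewrite eq_sym.
  move: (subset_leq_card sub); rewrite reg cardsU1.
  have -> : z \notin C :\ v.
    apply/negP => /setD1P [_ zC']; rewrite !inE in zC'; by rewrite zC' in zC.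
  have vC : v \in C by rewrite !inE euv orbT.
  have := cardsD1 v C; rewrite vC cardC /=; lia.
have gen : forall p x, x \in C -> path e x p -> last x p \in C.
  elim => [|z p IH] x //= xC /andP [exz pth].
  by apply: IH => //; apply: closed exz.
have allC y : y \in C.
  have /connectP [p pth ->] := conn u y.
  by apply: gen pth; rewrite !inE eqxx.
exfalso; apply: ncomp; split.
  by rewrite -cardC; apply: eq_card => y; rewrite allC inE.
move=> x y xy.
move: (allC x) (allC y); rewrite !inE => /orP [/eqP xu|eux] /orP [/eqP yu|euy].
- by move: xy; rewrite xu yu eqxx.
- by rewrite xu.
- by rewrite yu esym.
- exact: cl.
Qed.

Variable I : {set T}.
Hypothesis PI : Pind I.
Hypothesis Imax : forall J, Pind J -> #|J| <= #|I|.

Definition k v := #|N v :&: I|.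

Lemma indep x y : x \in I -> y \in I -> ~~ e x y.
Proof. by case/PindP: PI => H _; apply: H. Qed.

Lemma outP x : x \notin I -> exists2 y, e x y & y \notin I.
Proof. by case/PindP: PI => _ H; apply: H. Qed.

Lemma kd v : k v + #|N v :\: I| = d.
Proof. by rewrite /k cardsID reg. Qed.

Lemma sum_k : \sum_(v in ~: I) k v = d * #|I|.
Proof.
rewrite /k double_count // (eq_bigr (fun _ => d)) ?sum_nat_const; first by rewrite mulnC.
move=> u uI; rewrite -(reg u); apply: eq_card => v; rewrite !inE.
case euv: (e u v) => //=; apply/negP => vI.
by move: (indep uI vI); rewrite euv.
Qed.

Lemma M1 y : y \notin I -> N y :&: I = set0 ->
  exists x, x \notin I /\ N x :\: I = [set y].
Proof.
move=> yI Ny0.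
case: (boolP [exists x, (x \notin I) && (N x :\: I == [set y])]).
  by case/existsP => x /andP [xI /eqP]; exists x.
move/existsPn => Hn; exfalso.
have : Pind (y |: I).
  apply/PindP; split.
    have H z : z \in I -> ~~ e y z.
      move=> zI; apply/negP => eyz.
      have: z \in N y :&: I by rewrite inE inN eyz zI.
      by rewrite Ny0 inE.
    move=> x z; rewrite !inE => /orP [/eqP->|xI] /orP [/eqP->|zI].
    - by rewrite eirr.
    - exact: H.
    - by rewrite esym; apply: H.
    - exact: indep.
  move=> x; rewrite inE negb_or => /andP [xy xI].
  case: (pickP (fun z => e x z && (z \notin I) && (z != y))).
    move=> z /andP [/andP [exz zI] zy]; exists z => //.
    by rewrite !inE negb_or zy zI.
  move=> Hz; move: (Hn x); rewrite xI /=; case/negP.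
  rewrite eqEsubset; apply/andP; split.
    apply/subsetP => z; rewrite !inE => /andP [zI exz].
    by move: (Hz z); rewrite exz zI /= => /negbFE.
  apply/subsetP => z; rewrite inE => /eqP ->.
  have [w exw wI] := outP xI.
  move: (Hz w); rewrite exw wI /= => /negbFE /eqP wy.
  by rewrite inE yI inN -wy.
move/Imax; by rewrite cardsU1 yI add1n ltnn.
Qed.

Lemma M2 u a b : u \in I -> (forall v, e u v -> k v <= 1) ->
  e u a -> e u b -> a != b -> ~~ e a b ->
  exists x, [/\ x \notin I, N x :\: I != set0 & N x :\: I \subset [set a; b]].
Proof.
move=> uI kle1 eua eub ab nab.
case: (boolP [exists x, [&& x \notin I, N x :\: I != set0 & N x :\: I \subset [set a; b]]]).
  by case/existsP => x /and3P [*]; exists x.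
move/existsPn => Hn; exfalso.
have aI : a \notin I by apply/negP => aI; move: (indep uI aI); rewrite eua.
have bI : b \notin I by apply/negP => bI; move: (indep uI bI); rewrite eub.
have uniq_u w z : w \in [set a; b] -> z \in I -> e w z -> z = u.
  rewrite !inE => wab zI ewz.
  have ew : e u w by case/orP: wab => /eqP ->.
  move/card_le1_eqP: (kle1 w ew) => H.
  by apply: H; rewrite !inE ?ewz ?zI // esym ew.
have : Pind (a |: (b |: (I :\ u))).
  apply/PindP; split.
    move=> x z.
    have Hs w : (w \in a |: (b |: (I :\ u))) = (w \in [set a; b]) || ((w != u) && (w \in I)).
      by rewrite !inE orbA.
    rewrite !Hs => /orP [xab|/andP [xu xI]] /orP [zab|/andP [zu zI]].
    - move: xab zab; rewrite !inE => /orP [] /eqP -> /orP [] /eqP ->;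
        by rewrite ?eirr // esym.
    - by apply/negP => exz; move: (uniq_u _ _ xab zI exz) zu => ->; rewrite eqxx.
    - by apply/negP => exz; rewrite esym in exz; move: (uniq_u _ _ zab xI exz) xu => ->; rewrite eqxx.
    - exact: indep.
  move=> x; rewrite !inE !negb_or => /and3P [xa xb /nandP [/negbNE/eqP ->|xI]].
    have : ~~ (N u \subset [set a; b]).
      apply/negP => /subset_leq_card; rewrite reg cards2 ab.
      by case: d d3 => [|[|[]]].
    case/subsetPn => z; rewrite inN => euz zab; exists z => //.
    move: zab; rewrite !inE !negb_or => /andP [-> ->] /=.
    by apply/nandP; right; apply/negP => zI; move: (indep uI zI); rewrite euz.
  move: (Hn x); rewrite xI /= negb_and negbK => /orP [/eqP N0|].
    have [w exw wI] := outP xI.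
    have : w \in N x :\: I by rewrite !inE exw wI.
    by rewrite N0 inE.
  case/subsetPn => z; rewrite inE inN => /andP [zI exz] zab; exists z => //.
  move: zab; rewrite !inE !negb_or => /andP [-> ->] /=. by rewrite (negbTE zI) andbF.
have h1 : a \notin b |: (I :\ u) by rewrite !inE (negbTE ab) (negbTE aI) andbF.
have h2 : b \notin I :\ u by rewrite !inE (negbTE bI) andbF.
move/Imax; rewrite cardsU1 h1 cardsU1 h2 (cardsD1 u I) uI /=; lia.
Qed.


Lemma tvc : total_vertex_cover e (~: I).
Proof.
split.
  move=> x y exy; rewrite !inE -negb_and; apply/negP => /andP [xI yI].
  by move: (indep xI yI); rewrite exy.
move=> x; case: (boolP (x \in I)) => xI.
  have [y exy] := nbr_exists x; exists y => //; rewrite inE.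
  by apply/negP => yI; move: (indep xI yI); rewrite exy.
by have [y exy yI] := outP xI; exists y; rewrite ?inE.
Qed.

Definition U := [set y | (y \notin I) && (N y :&: I == set0)].
Definition Pt := [set x | (x \notin I) && [exists y, (N x :\: I == [set y]) && (y \in U)]].
Definition h x := odflt x [pick y in N x :\: I].

Lemma U_Pt : #|U| <= #|Pt|.
Proof.
apply: leq_trans (leq_imset_card h Pt).
apply: subset_leq_card; apply/subsetP => y; rewrite inE => /andP [yI /eqP Ny0].
have [x [xI Nx]] := M1 yI Ny0.
apply/imsetP; exists x.
  rewrite inE xI /=; apply/existsP; exists y; by rewrite Nx eqxx inE yI Ny0 eqxx.
rewrite /h; case: pickP => [z|].
  by rewrite Nx inE => /eqP.
by move/(_ y); rewrite Nx inE eqxx.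
Qed.

Lemma Pt_k x : x \in Pt -> k x + 1 = d.
Proof.
rewrite inE => /andP [_ /existsP [y /andP [/eqP H _]]].
by rewrite -(kd x) H cards1.
Qed.

Lemma U_k v : v \notin I -> (v \in U) = (k v == 0).
Proof. by move=> vI; rewrite inE vI /k cards_eq0. Qed.

Lemma sub_notI (A : {set T}) : (forall v, v \in A -> v \notin I) ->
  \sum_(v in ~: I) (v \in A : nat) = #|A|.
Proof.
move=> H; rewrite sum_ind; apply: eq_card => v; rewrite !inE andbC.
by case vA: (v \in A) => //=; apply: H.
Qed.

Lemma part1 : #|~: I| <= d * #|I|.
Proof.
have PtI v : v \in Pt -> v \notin I by rewrite inE => /andP [].
have UI v : v \in U -> v \notin I by rewrite inE => /andP [].
have H : \sum_(v in ~: I) (1 + (v \in Pt)) <= \sum_(v in ~: I) (k v + (v \in U)).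
  apply: leq_sum => v; rewrite inE => vI.
  rewrite (U_k vI).
  case: (boolP (v \in Pt)) => vP.
    by move: (Pt_k vP); case: (k v) => [|kk] /=; lia.
  case: (k v) => //.
move: H; rewrite !big_split /= sum1_card !sub_notI // sum_k.
have := U_Pt; lia.
Qed.


Definition B := [set u in I | [forall v, e u v ==> (k v <= 1)]].
Definition X := [set x | [&& x \notin I, N x :\: I != set0, #|N x :\: I| <= 2 &
                           [exists u in B, N x :\: I \subset N u]]].
Definition f x := if [pick a in N x :\: I] is Some a then odflt x [pick u in N a :&: I] else x.

Lemma B_X : (forall u, exists a b, [/\ e u a, e u b, a != b & ~~ e a b]) -> #|B| <= #|X|.
Proof.
move=> NC; apply: leq_trans (leq_imset_card f X).
apply: subset_leq_card; apply/subsetP => u; rewrite inE => /andP [uI /forallP Bu].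
have kle1 v : e u v -> k v <= 1 by move=> euv; move/implyP: (Bu v); apply.
have [a [b [eua eub ab nab]]] := NC u.
have [x [xI Nx0 Nxab]] := M2 uI kle1 eua eub ab nab.
have abN : [set a; b] \subset N u.
  by apply/subsetP => z; rewrite !inE => /orP [] /eqP ->.
apply/imsetP; exists x.
  rewrite inE xI Nx0 /=; apply/andP; split.
    by apply: leq_trans (subset_leq_card Nxab) _; rewrite cards2; case: (a != b).
  apply/existsP; exists u; rewrite inE uI /=; apply/andP; split.
    by apply/forallP => v; apply/implyP; apply: kle1.
  exact: subset_trans Nxab abN.
rewrite /f; case: pickP => [a' a'N|].
  have eua' : e u a' by rewrite -inN; apply: (subsetP abN); apply: (subsetP Nxab).
  case: pickP => [u' u'N|] /=.
    move/card_le1_eqP: (kle1 a' eua') => H; apply: H => //.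
    by rewrite !inE esym eua' uI.
  by move/(_ u); rewrite !inE esym eua' uI.
move=> H; case/set0Pn: Nx0 => z zN; by move: (H z); rewrite zN.
Qed.

Definition w v := if 2 <= k v then k v else 0.

Lemma good : #|I :\: B| <= \sum_(v in ~: I) w v.
Proof.
have Hw v : w v = \sum_(u in I) ((u \in N v) && (2 <= k v) : nat).
  rewrite /w; case: (2 <= k v).
    by rewrite /k setIC -sum_ind; apply: eq_bigr => u _; rewrite andbT.
  by rewrite big1 // => u _; rewrite andbF.
under eq_bigr do rewrite Hw.
rewrite exchange_big /= setDE -sum_ind.
apply: leq_sum => u uI; rewrite inE.
case: (boolP (u \in B)) => //= uB.
move: uB; rewrite inE uI /= => /forallPn [v]; rewrite negb_imply => /andP [euv kv].
have vI : v \in ~: I.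
  by rewrite inE; apply/negP => vI; move: (indep uI vI); rewrite euv.
rewrite (bigD1 v) //= inN esym euv (ltnNge 1 (k v)) kv /=; exact: leq_addr.
Qed.

Lemma X_k x : x \in X -> d <= k x + 2.
Proof.
rewrite inE => /and4P [_ _ c _]; have := kd x; lia.
Qed.

Lemma X_Pt x : x \in X -> x \notin Pt.
Proof.
rewrite !inE => /and4P [_ _ _ /existsP [u /andP [uB sub]]].
apply/negP => /andP [xI /existsP [y /andP [/eqP Ny yU]]].
move: sub; rewrite Ny sub1set inN => euy.
move: yU; rewrite inE => /andP [_ /eqP Ny0].
move: uB; rewrite inE => /andP [uI _].
have : u \in N y :&: I by rewrite !inE esym euy uI.
by rewrite Ny0 inE.
Qed.

Lemma part2 : 5 <= d -> (forall u, exists a b, [/\ e u a, e u b, a != b & ~~ e a b]) ->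
  2 * #|~: I| + #|I| <= 2 * d * #|I|.
Proof.
move=> d5 NC.
have PtI v : v \in Pt -> v \notin I by rewrite inE => /andP [].
have UI v : v \in U -> v \notin I by rewrite inE => /andP [].
have XI v : v \in X -> v \notin I by rewrite inE => /and4P [].
have H : \sum_(v in ~: I) (2 + w v + (v \in X) + (v \in Pt) + (v \in Pt))
      <= \sum_(v in ~: I) (k v + k v + (v \in U) + (v \in U)).
  apply: leq_sum => v; rewrite inE => vI.
  rewrite (U_k vI) /w.
  have hX := X_k (x := v); have hXP := X_Pt (x := v); have hP := Pt_k (x := v).
  case: (v \in X) hX hXP => [/(_ erefl) hX /(_ erefl) /negbTE -> | _ _] /=.
    case: (2 <= k v) => /=; lia.
  case: (v \in Pt) hP => [/(_ erefl) hP | _] /=.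
    case: (2 <= k v) => /=; lia.
  case: (k v) => [|[|kk]] //=; lia.
move: H; rewrite !big_split /= sum_nat_const !sub_notI // sum_k.
have := U_Pt; have := B_X NC; have := good.
have := cardsID B I.
have -> : I :&: B = B by apply/setIidPr/subsetP => u; rewrite inE => /andP [].
lia.
Qed.


End Pf.

Theorem theorem1p6 (d : nat) (d_ge3 : 3 <= d) :
  (forall (T : finType) (e : rel T), simple_graph e -> regular e d ->
     exists S : {set T}, total_vertex_cover e S /\ #|S| * d.+1 <= d * #|T|)
  /\
  (5 <= d ->
   forall (T : finType) (e : rel T), simple_graph e -> regular e d ->
     connected_graph e -> ~ is_complete_graph e d.+1 ->
     exists S : {set T}, total_vertex_cover e S /\
       #|S| * d.+1 * (2 * d).+1 <= (d * (2 * d).+1 - 1) * #|T|).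
Proof.
split.
  move=> T e [esym eirr] reg.
  case: (arg_maxnP (fun J : {set T} => #|J|) (Pind0 reg d_ge3)) => I PI Imax.
  exists (~: I); split; first exact: tvc.
  have p1 := part1 esym eirr reg d_ge3 PI Imax.
  have cT := cardsC I.
  rewrite -cT; nia.
move=> d5 T e [esym eirr] reg conn ncomp.
case: (arg_maxnP (fun J : {set T} => #|J|) (Pind0 reg d_ge3)) => I PI Imax.
exists (~: I); split; first exact: tvc.
have p2 := part2 esym eirr reg d_ge3 PI Imax d5 (nonclique esym eirr reg d_ge3 conn ncomp).
have cT := cardsC I.
rewrite -cT; nia.
Qed.
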